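(* Let $\phi:\mathbb{M}_n\to\mathbb{M}_m$ be a positive linear map, and let $\phi^*:\mathbb{M}_m\to\mathbb{M}_n$ denote its adjoint with respect to the Hilbert–Schmidt inner product $\langle A,B\rangle=\mathrm{Tr}[A^*B]$. Then $\phi$ is a generalized Schwarz map if and only if for every pair $(K,X)\in \mathbb{M}_m\times\mathbb{M}_m^+$ with $\ker(X)\subseteq\ker(K^* )$ we have \[ \mathrm{Tr}[\phi^*(K^*X^{+}K)] \geq \mathrm{Tr}[\phi^*(K)^*\phi^*(X)^{+}\phi^*(K)]. \]
   Context: $\mathbb{M}_n$ denotes the $n\times n$ complex matrices and $\mathbb{M}_n^+$ the positive semidefinite ones; $\mathbf{1}_n$ is the identity. For a matrix $Z$, $Z^+$ denotes its Moore–Penrose generalized inverse. A linear map $\phi:\mathbb{M}_n\to\mathbb{M}_m$ is called positive if it maps $\mathbb{M}_n^+$ into $\mathbb{M}_m^+$. A linear map $\phi:\mathbb{M}_n\to\mathbb{M}_m$ is called a generalized Schwarz map if for all $K\in\mathbb{M}_n$ the block matrix $\begin{pmatrix}\phi(\mathbf{1}_n) & \phi(K)\\ \phi(K)^* & \phi(K^*K)\end{pmatrix}$ is positive semidefinite. *)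

(* Defs.v *)
From HB Require Import structures.
From mathcomp Require Import all_boot all_order all_algebra.
From mathcomp Require Import sesquilinear spectral.
From Stdlib Require Import ClassicalEpsilon.
Set Implicit Arguments. Unset Strict Implicit. Unset Printing Implicit Defensive.
Import Order.TTheory GRing.Theory Num.Theory.
Local Open Scope ring_scope.
Local Open Scope sesquilinear_scope.

(* Complex scalars: an arbitrary numeric algebraically closed field C
   (e.g. the complex numbers); A ^t* is the conjugate transpose A^*. *)

(* Positive semidefinite: v^* A v >= 0 for every vector v
   (over C this also forces A to be Hermitian). *)
Definition psdmx (C : numClosedFieldType) (n : nat) (A : 'M[C]_n) : Prop :=
  forall v : 'cV[C]_n, 0 <= (v ^t* *m A *m v) 0 0.

Definition positive_map (C : numClosedFieldType) (n m : nat)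
  (phi : 'M[C]_n -> 'M[C]_m) : Prop :=
  forall A : 'M[C]_n, psdmx A -> psdmx (phi A).

Definition gen_schwarz (C : numClosedFieldType) (n m : nat)
  (phi : 'M[C]_n -> 'M[C]_m) : Prop :=
  forall K : 'M[C]_n,
    psdmx (block_mx (phi 1%:M) (phi K) ((phi K) ^t*) (phi (K ^t* *m K))).

Definition penrose (C : numClosedFieldType) (n : nat) (A B : 'M[C]_n) : Prop :=
  [/\ A *m B *m A = A, B *m A *m B = B,
      (A *m B) ^t* = A *m B & (B *m A) ^t* = B *m A].

(* Moore–Penrose generalized inverse Z^+ : the (unique, always existing)
   matrix satisfying the Penrose conditions. *)
Definition mpinv (C : numClosedFieldType) (n : nat) (A : 'M[C]_n) : 'M[C]_n :=
  epsilon (inhabits 0) (penrose A).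

Definition hs_adjoint (C : numClosedFieldType) (n m : nat)
  (phi : 'M[C]_n -> 'M[C]_m) (psi : 'M[C]_m -> 'M[C]_n) : Prop :=
  forall (A : 'M[C]_m) (B : 'M[C]_n), \tr (A ^t* *m phi B) = \tr ((psi A) ^t* *m B).

(* Main.v *)
Require Import Defs.
From HB Require Import structures.
From mathcomp Require Import all_boot all_order all_algebra.
From mathcomp Require Import sesquilinear spectral.
From Stdlib Require Import ClassicalEpsilon.
From mathcomp Require Import ring.
Import Order.TTheory GRing.Theory Num.Theory.
Local Open Scope ring_scope.
Local Open Scope sesquilinear_scope.
Set Implicit Arguments. Unset Strict Implicit.

Lemma adjM {C : numClosedFieldType} m n p (A : 'M[C]_(m, n)) (B : 'M[C]_(n, p)) :
  (A *m B) ^t* = B ^t* *m A ^t*.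
Proof. by rewrite trmx_mul map_mxM. Qed.
Lemma adjD {C : numClosedFieldType} m n (A B : 'M[C]_(m, n)) :
  (A + B) ^t* = A ^t* + B ^t*.
Proof. by rewrite linearD map_mxD. Qed.
Lemma adjN {C : numClosedFieldType} m n (A : 'M[C]_(m, n)) :
  (- A) ^t* = - A ^t*.
Proof. by rewrite linearN map_mxN. Qed.
Lemma adjB {C : numClosedFieldType} m n (A B : 'M[C]_(m, n)) :
  (A - B) ^t* = A ^t* - B ^t*.
Proof. by rewrite adjD adjN. Qed.
Lemma adjZ {C : numClosedFieldType} m n a (A : 'M[C]_(m, n)) :
  (a *: A) ^t* = a^* *: A ^t*.
Proof. by rewrite linearZ map_mxZ. Qed.
Lemma adj1 {C : numClosedFieldType} n : (1%:M : 'M[C]_n) ^t* = 1%:M.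
Proof. by rewrite trmx1 map_mx1. Qed.
Lemma adjsc {C : numClosedFieldType} n a : (a%:M : 'M[C]_n) ^t* = a^*%:M.
Proof. by rewrite tr_scalar_mx map_scalar_mx. Qed.
Lemma adjE {C : numClosedFieldType} m n (A : 'M[C]_(m, n)) i j :
  (A ^t*) i j = (A j i)^*.
Proof. by rewrite !mxE. Qed.
Lemma tr_adj {C : numClosedFieldType} n (A : 'M[C]_n) : \tr (A ^t*) = (\tr A)^*.
Proof. by rewrite /mxtrace rmorph_sum; apply: eq_bigr => i _; rewrite !mxE. Qed.
Lemma tr11 {C : numClosedFieldType} (A : 'M[C]_1) : \tr A = A 0 0.
Proof. by rewrite /mxtrace big_ord1. Qed.
Definition bf {C : numClosedFieldType} {n} (A : 'M[C]_n) (u w : 'cV[C]_n) : C :=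
  (u ^t* *m A *m w) 0 0.

Lemma bfDl {C : numClosedFieldType} n (A : 'M[C]_n) u1 u2 w :
  bf A (u1 + u2) w = bf A u1 w + bf A u2 w.
Proof. by rewrite /bf adjD !mulmxDl mxE. Qed.
Lemma bfDr {C : numClosedFieldType} n (A : 'M[C]_n) u w1 w2 :
  bf A u (w1 + w2) = bf A u w1 + bf A u w2.
Proof. by rewrite /bf !mulmxDr mxE. Qed.
Lemma bfZl {C : numClosedFieldType} n (A : 'M[C]_n) c u w :
  bf A (c *: u) w = c^* * bf A u w.
Proof. by rewrite /bf adjZ -!scalemxAl mxE. Qed.
Lemma bfZr {C : numClosedFieldType} n (A : 'M[C]_n) c u w :
  bf A u (c *: w) = c * bf A u w.
Proof. by rewrite /bf -!scalemxAr mxE. Qed.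
Lemma bf_adj {C : numClosedFieldType} n (A : 'M[C]_n) u w :
  bf (A ^t*) u w = (bf A w u)^*.
Proof.
by rewrite /bf -[in RHS]adjE !adjM trmxCK mulmxA.
Qed.
Lemma bf_lin {C : numClosedFieldType} n (A B : 'M[C]_n) u w :
  bf (A + B) u w = bf A u w + bf B u w.
Proof. by rewrite /bf mulmxDr mulmxDl mxE. Qed.
Lemma bf_opp {C : numClosedFieldType} n (A : 'M[C]_n) u w :
  bf (- A) u w = - bf A u w.
Proof. by rewrite /bf mulmxN mulNmx mxE. Qed.

Lemma bf_delta {C : numClosedFieldType} n (A : 'M[C]_n) i j :
  bf A (delta_mx i 0) (delta_mx j 0) = A i j.
Proof. by rewrite /bf trmx_delta map_delta_mx -rowE -colE !mxE. Qed.
Lemma bf_zero {C : numClosedFieldType} n (A : 'M[C]_n) :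
  (forall u, bf A u u = 0) -> A = 0.
Proof.
move=> h; have key : forall u w, bf A u w = 0.
  move=> u w.
  have h1 := h (u + w); rewrite !bfDl !bfDr h h addr0 add0r in h1.
  have h2 := h (u + 'i *: w); rewrite !bfDl !bfDr !bfZl !bfZr h h in h2.
  rewrite !mulr0 addr0 add0r conjCi in h2.
  have e1 : bf A w u = - bf A u w by apply/eqP; rewrite -addr_eq0 addrC h1.
  rewrite e1 mulNr mulrN opprK -mulrDr in h2.
  move/eqP: h2; rewrite mulf_eq0 (negbTE (neq0Ci _)) /=.
  by rewrite -mulr2n mulrn_eq0 /= => /eqP.
by apply/matrixP => i j; rewrite -bf_delta key mxE.
Qed.

Lemma herm_of_real {C : numClosedFieldType} n (A : 'M[C]_n) :
  (forall u, bf A u u \is Num.real) -> A ^t* = A.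
Proof.
move=> h; apply/eqP; rewrite -subr_eq0; apply/eqP/bf_zero => u.
by rewrite bf_lin bf_opp bf_adj conj_Creal // subrr.
Qed.

Lemma psd_herm {C : numClosedFieldType} n (A : 'M[C]_n) : psdmx A -> A ^t* = A.
Proof. by move=> h; apply: herm_of_real => u; apply: ger0_real; apply: h. Qed.
Lemma psdE {C : numClosedFieldType} n (A : 'M[C]_n) : psdmx A <-> forall u, 0 <= bf A u u.
Proof. by []. Qed.

Lemma bfZm {C : numClosedFieldType} n (A : 'M[C]_n) c u w :
  bf (c *: A) u w = c * bf A u w.
Proof. by rewrite /bf -scalemxAr -scalemxAl mxE. Qed.

Lemma psdD {C : numClosedFieldType} n (A B : 'M[C]_n) :
  psdmx A -> psdmx B -> psdmx (A + B).
Proof. by move=> hA hB u; rewrite -/(bf _ u u) bf_lin addr_ge0 //; [apply: hA|apply: hB]. Qed.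

Lemma psdZ {C : numClosedFieldType} n (A : 'M[C]_n) c :
  0 <= c -> psdmx A -> psdmx (c *: A).
Proof. by move=> hc hA u; rewrite -/(bf _ u u) bfZm mulr_ge0 //; apply: hA. Qed.

Lemma psd1 {C : numClosedFieldType} n : psdmx (1%:M : 'M[C]_n).
Proof.
move=> u; rewrite mulmx1 mxE; apply: sumr_ge0 => i _.
by rewrite !mxE mulrC mul_conjC_ge0.
Qed.

Lemma mx11E {C : numClosedFieldType} (A B : 'M[C]_1) : (A *m B) 0 0 = A 0 0 * B 0 0.
Proof. by rewrite mxE big_ord1. Qed.

Lemma bf_rank1 {C : numClosedFieldType} n (u v : 'cV[C]_n) :
  bf (u *m u ^t*) v v = (v ^t* *m u) 0 0 * ((v ^t* *m u) 0 0)^*.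
Proof.
rewrite /bf !mulmxA -mulmxA mx11E; congr (_ * _).
by rewrite -adjE adjM trmxCK.
Qed.

Lemma psd_rank1 {C : numClosedFieldType} n (u : 'cV[C]_n) : psdmx (u *m u ^t*).
Proof. by move=> v; rewrite -/(bf _ v v) bf_rank1 mul_conjC_ge0. Qed.

Lemma spec_psd {C : numClosedFieldType} n (A : 'M[C]_n) : psdmx A ->
  exists P : 'M[C]_n, exists d : 'rV[C]_n,
    [/\ P *m P ^t* = 1%:M, P ^t* *m P = 1%:M, A = P ^t* *m diag_mx d *m P &
        forall i, 0 <= d 0 i].
Proof.
move=> hA.
have hh : A \is hermsymmx.
  by apply/is_hermitianmxP; rewrite expr0 scale1r; have := psd_herm hA => ->.
have /orthomx_spectralP eA := hermitian_normalmx hh.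
have U := spectral_unitarymx A.
have P1 : spectralmx A *m (spectralmx A) ^t* = 1%:M by apply/unitarymxP.
have P2 : (spectralmx A) ^t* *m spectralmx A = 1%:M.
  by rewrite -invmx_unitary // mulVmx // spectral_unit.
rewrite invmx_unitary // in eA.
clear U hh; move: (spectralmx A) (spectral_diag A) P1 P2 eA => P d P1 P2 eA.
exists P, d; split => // i.
have := hA (P ^t* *m delta_mx i 0).
rewrite eA adjM trmxCK !mulmxA -(mulmxA _ P) P1 mulmx1.
rewrite -!(mulmxA _ P) P1 mulmx1.
rewrite trmx_delta map_delta_mx -rowE -colE !mxE eqxx.
by rewrite mulr1n.
Qed.
Lemma adj_diag {C : numClosedFieldType} n (e : 'rV[C]_n) :
  (diag_mx e) ^t* = diag_mx (map_mx Num.conj e).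
Proof. by rewrite tr_diag_mx map_diag_mx. Qed.

Lemma fact_psd {C : numClosedFieldType} n (A : 'M[C]_n) : psdmx A ->
  exists F : 'M[C]_n, A = F ^t* *m F.
Proof.
move=> /spec_psd [P [d [P1 P2 eA hd]]].
exists (diag_mx (\row_j sqrtC (d 0 j)) *m P).
rewrite adjM adj_diag mulmxA -(mulmxA (P ^t*)) mulmx_diag eA.
congr (_ *m diag_mx _ *m _); apply/rowP => j; rewrite !mxE.
rewrite conj_Creal ?sqrtC_real // -expr2 sqrtCK //.
Qed.

Lemma mx_ii {C : numClosedFieldType} m n (X : 'M[C]_(m, n)) (Y : 'M[C]_(n, m)) i :
  (X *m Y) i i = (row i X *m col i Y) 0 0.
Proof. by rewrite !mxE; apply: eq_bigr => k _; rewrite !mxE. Qed.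

Lemma tr_sand {C : numClosedFieldType} k n (F : 'M[C]_(k, n)) (B : 'M[C]_n) :
  psdmx B -> 0 <= \tr (F *m B *m F ^t*).
Proof.
move=> hB; rewrite /mxtrace; apply: sumr_ge0 => i _.
rewrite mx_ii row_mul.
have -> : row i F = (col i (F ^t*)) ^t*.
  by apply/matrixP => a b; rewrite (ord1 a) !mxE conjCK.
exact: hB.
Qed.

Lemma tr_psd_mul {C : numClosedFieldType} n (A B : 'M[C]_n) :
  psdmx A -> psdmx B -> 0 <= \tr (A *m B).
Proof.
move=> /fact_psd [F ->] hB.
by rewrite -mulmxA mxtrace_mulC; apply: tr_sand.
Qed.

Lemma tr_psd {C : numClosedFieldType} n (A : 'M[C]_n) : psdmx A -> 0 <= \tr A.
Proof.
move=> hA; have := tr_sand (1%:M : 'M[C]_n) hA.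
by rewrite adj1 mulmx1 mul1mx.
Qed.

Lemma psd_tr0 {C : numClosedFieldType} n (A : 'M[C]_n) :
  psdmx A -> \tr A = 0 -> A = 0.
Proof.
move=> /fact_psd [F ->]; rewrite mxtrace_mulC => h.
suff -> : F = 0 by rewrite mulmx0.
apply/matrixP => i j; rewrite mxE.
have h1 := psumr_eq0P _ h.
have : (F *m F ^t*) i i = 0.
  apply: h1 => // a _; rewrite mxE; apply: sumr_ge0 => b _.
  by rewrite !mxE mul_conjC_ge0.
rewrite mxE => h2.
have hb : forall b, true -> 0 <= F i b * (F ^t*) b i.
  by move=> b _; rewrite !mxE mul_conjC_ge0.
have /eqP := psumr_eq0P hb h2 (i:=j) isT.
by rewrite !mxE mul_conjC_eq0 => /eqP.
Qed.
Lemma xVx {C : numClosedFieldType} (x : C) : x * x^-1 * x = x.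
Proof.
have [->|nz] := eqVneq x 0; first by rewrite !mul0r.
by rewrite mulfV // mul1r.
Qed.
Lemma Vxx {C : numClosedFieldType} (x : C) : x^-1 * x * x^-1 = x^-1.
Proof.
have [->|nz] := eqVneq x 0; first by rewrite invr0 !mul0r.
by rewrite mulVf // mul1r.
Qed.

Lemma adj_conjd {C : numClosedFieldType} n (P : 'M[C]_n) e :
  (P ^t* *m diag_mx e *m P) ^t* = P ^t* *m diag_mx (map_mx Num.conj e) *m P.
Proof. by rewrite !adjM trmxCK adj_diag mulmxA. Qed.

Lemma penrose_exists {C : numClosedFieldType} n (A : 'M[C]_n) :
  psdmx A -> exists B, penrose A B.
Proof.
move=> /spec_psd [P [d [P1 P2 -> hd]]].
pose e := \row_j (d 0 j)^-1.
exists (P ^t* *m diag_mx e *m P).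
have M : forall f g : 'rV[C]_n, P ^t* *m diag_mx f *m P *m (P ^t* *m diag_mx g *m P)
   = P ^t* *m diag_mx (\row_j (f 0 j * g 0 j)) *m P.
  move=> f g; rewrite !mulmxA -(mulmxA _ P) P1 mulmx1 -(mulmxA _ (diag_mx f)).
  by rewrite mulmx_diag.
have hr : forall j, (d 0 j)^* = d 0 j by move=> j; rewrite conj_Creal // ger0_real.
split; rewrite ?M.
- congr (_ *m diag_mx _ *m _); apply/rowP => j; rewrite !mxE; exact: xVx.
- congr (_ *m diag_mx _ *m _); apply/rowP => j; rewrite !mxE; exact: Vxx.
- rewrite adj_conjd; congr (_ *m diag_mx _ *m _); apply/rowP => j.
  by rewrite !mxE conj_Creal // ?rpredM ?rpredV // ger0_real.
- rewrite adj_conjd; congr (_ *m diag_mx _ *m _); apply/rowP => j.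
  by rewrite !mxE conj_Creal // ?rpredM ?rpredV // ger0_real.
Qed.

Lemma mpinvP {C : numClosedFieldType} n (A : 'M[C]_n) :
  psdmx A -> penrose A (mpinv A).
Proof.
move=> /penrose_exists [B hB]; rewrite /mpinv.
by apply: epsilon_spec; exists B.
Qed.

Lemma penrose_uniq {C : numClosedFieldType} n (A B D : 'M[C]_n) :
  penrose A B -> penrose A D -> B = D.
Proof.
move=> [b1 b2 b3 b4] [d1 d2 d3 d4].
have e1 : A *m B = A *m D *m A *m B by rewrite d1.
have eB : B = B *m A *m D.
  rewrite -{1}b2 -mulmxA -b3 e1 -(mulmxA (A *m D)) adjM b3 d3 !mulmxA b2.
  by [].
have e2 : D *m A = D *m A *m B *m A.
  by rewrite -(mulmxA D A B) -(mulmxA D (A *m B) A) b1.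
have eD : D = B *m A *m D.
  rewrite -{1}d2 -d4 e2 -(mulmxA (D *m A) B A) adjM b4 d4.
  by rewrite -(mulmxA (B *m A) (D *m A) D) d2.
by rewrite eD -eB.
Qed.

Lemma penrose_herm {C : numClosedFieldType} n (A B : 'M[C]_n) :
  A ^t* = A -> penrose A B -> B ^t* = B.
Proof.
move=> hA hB; apply: (penrose_uniq _ hB).
case: hB => b1 b2 b3 b4; split.
- by have := congr1 (fun X => X ^t*) b1; rewrite /= !adjM hA mulmxA.
- by have := congr1 (fun X => X ^t*) b2; rewrite /= !adjM hA mulmxA.
- by rewrite adjM trmxCK hA -b4 adjM hA.
- by rewrite adjM trmxCK hA -b3 adjM hA.
Qed.
Lemma tr_delta {C : numClosedFieldType} k (X : 'M[C]_k) i j :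
  \tr (X *m delta_mx i j) = X j i.
Proof.
rewrite -(mul_delta_mx (0 : 'I_1)) mulmxA mxtrace_mulC tr11.
by rewrite -rowE -colE !mxE.
Qed.

Lemma tr_nondeg {C : numClosedFieldType} k (M1 M2 : 'M[C]_k) :
  (forall B, \tr (M1 ^t* *m B) = \tr (M2 ^t* *m B)) -> M1 = M2.
Proof.
move=> h; apply/matrixP => i j.
have := h (delta_mx i j); rewrite !tr_delta !mxE => e.
by rewrite -[M1 i j]conjCK e conjCK.
Qed.

Lemma trvv {C : numClosedFieldType} k (M : 'M[C]_k) (u w : 'cV[C]_k) :
  \tr (M *m (u *m w ^t*)) = bf M w u.
Proof. by rewrite mulmxA mxtrace_mulC tr11 /bf mulmxA. Qed.

Lemma sum_zero {C : numClosedFieldType} n m (h : 'M[C]_n -> 'M[C]_m) :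
  (forall A B : 'M[C]_n, h (A + B) = h A + h B) ->
  forall (I : finType) (F : I -> 'M[C]_n), (forall i, h (F i) = 0) ->
  h (\sum_i F i) = 0.
Proof.
move=> hD I F hF; elim/big_ind: _ => //.
- have := hD 0 0; rewrite addr0 => /eqP; rewrite -subr_eq0 => /eqP.
  by rewrite opprD addrA subrr sub0r => /eqP; rewrite oppr_eq0 => /eqP.
- by move=> x y hx hy; rewrite hD hx hy addr0.
Qed.

Lemma span_zero {C : numClosedFieldType} n m (h : 'M[C]_n -> 'M[C]_m) :
  (forall A B : 'M[C]_n, h (A + B) = h A + h B) ->
  (forall c (A : 'M[C]_n), h (c *: A) = c *: h A) ->
  (forall u : 'cV[C]_n, h (u *m u ^t*) = 0) ->
  forall Z, h Z = 0.
Proof.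
move=> hD hZ h0.
have key : forall u w : 'cV[C]_n, h (u *m w ^t*) = 0.
  move=> u w.
  have e1 := h0 (u + w).
  rewrite adjD mulmxDl !mulmxDr !hD !h0 add0r addr0 in e1.
  have e2 := h0 (u + 'i *: w).
  rewrite adjD adjZ mulmxDl !mulmxDr !hD !h0 in e2.
  rewrite -scalemxAr -scalemxAl -scalemxAr -scalemxAl !hZ h0 !scaler0 in e2.
  have e3 : h (w *m u ^t*) = - h (u *m w ^t*).
    by apply/eqP; rewrite -addr_eq0 addrC e1.
  move/eqP: e2; rewrite add0r addr0 conjCi e3 scaleNr scalerN -opprD oppr_eq0.
  rewrite -scalerDr scaler_eq0 (negbTE (neq0Ci _)) /=.
  by rewrite -mulr2n -scaler_nat scaler_eq0 pnatr_eq0 /= => /eqP.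
move=> Z; rewrite [Z]matrix_sum_delta.
apply: sum_zero => // i; apply: sum_zero => // j.
rewrite hZ -(mul_delta_mx (0 : 'I_1)).
have -> : (delta_mx 0 j : 'rV[C]_n) = (delta_mx j 0) ^t*.
  by rewrite trmx_delta map_delta_mx.
by rewrite key scaler0.
Qed.
Lemma phi_herm {C : numClosedFieldType} n m (phi : {linear 'M[C]_n -> 'M[C]_m}) :
  positive_map phi -> forall Z, phi (Z ^t*) = (phi Z) ^t*.
Proof.
move=> hpos.
have hz : forall Z, (phi (Z ^t*)) ^t* - phi Z = 0.
  apply: (@span_zero C n m (fun Z => (phi (Z ^t*)) ^t* - phi Z)).
  2: by move=> c A; rewrite /= adjZ linearZ /= adjZ conjCK linearZ /= scalerBr.
  2: by move=> u /=; rewrite adjM trmxCK (psd_herm (hpos _ (psd_rank1 u))) subrr.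
  by move=> A B /=; rewrite (adjD A B) !linearD /= map_mxD addrACA.
move=> Z; have /eqP := hz Z; rewrite subr_eq0 => /eqP <-; by rewrite trmxCK.
Qed.
Lemma phis_add {C : numClosedFieldType} n m (phi : {linear 'M[C]_n -> 'M[C]_m}) phis :
  hs_adjoint phi phis -> forall A B, phis (A + B) = phis A + phis B.
Proof.
move=> hadj A B; apply: tr_nondeg => X.
by rewrite -hadj adjD mulmxDl mxtraceD !hadj -mxtraceD -mulmxDl adjD.
Qed.

Lemma phis_scale {C : numClosedFieldType} n m (phi : {linear 'M[C]_n -> 'M[C]_m}) phis :
  hs_adjoint phi phis -> forall c A, phis (c *: A) = c *: phis A.
Proof.
move=> hadj c A; apply: tr_nondeg => X.
by rewrite -hadj adjZ -scalemxAl mxtraceZ hadj adjZ -scalemxAl mxtraceZ.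
Qed.

Lemma tr_conj {C : numClosedFieldType} k (A B : 'M[C]_k) :
  \tr (A *m B) = (\tr (B ^t* *m A ^t*))^*.
Proof. by rewrite -adjM tr_adj conjCK. Qed.

Lemma phis_herm {C : numClosedFieldType} n m (phi : {linear 'M[C]_n -> 'M[C]_m}) phis :
  positive_map phi -> hs_adjoint phi phis -> forall A, phis (A ^t*) = (phis A) ^t*.
Proof.
move=> hpos hadj A; apply: tr_nondeg => X.
rewrite -hadj trmxCK trmxCK.
rewrite [RHS]tr_conj [in RHS]mxtrace_mulC -hadj phi_herm // -adjM tr_adj conjCK.
by rewrite mxtrace_mulC.
Qed.

Lemma phis_pos {C : numClosedFieldType} n m (phi : {linear 'M[C]_n -> 'M[C]_m}) phis :
  positive_map phi -> hs_adjoint phi phis -> positive_map phis.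
Proof.
move=> hpos hadj A hA v.
have h1 := tr_psd_mul hA (hpos _ (psd_rank1 v)).
rewrite -{1}(psd_herm hA) hadj trvv bf_adj in h1.
rewrite -/(bf _ v v).
have r : (bf (phis A) v v)^* \is Num.real by apply: ger0_real.
by rewrite -[bf _ v v]conjCK conj_Creal.
Qed.
Lemma real_quad {C : numClosedFieldType} (d c : C) : 0 <= c ->
  (forall s : C, s \is Num.real -> 0 <= s * d + s * s * c) -> d = 0.
Proof.
move=> hc h.
have dr : d \is Num.real.
  have := h 1 (rpred1 _); rewrite !mul1r => h1.
  have -> : d = (d + c) - c by rewrite addrK.
  by rewrite rpredB // ger0_real.
have c1 : c + 1 != 0 by rewrite gt_eqF // ltr_wpDl.
have c1r : c + 1 \is Num.real by rewrite rpredD // ?rpred1 // ger0_real.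
pose x := d / (c + 1).
have xr : x \is Num.real by rewrite rpredM // rpredV.
have := h (- x); rewrite rpredN => /(_ xr).
have -> : - x * d + - x * - x * c = - (x * x^*).
  rewrite conj_Creal // /x; field; done.
rewrite oppr_ge0 => hle.
have /eqP : x * x^* = 0 by apply/le_anti; rewrite hle mul_conjC_ge0.
rewrite mul_conjC_eq0 /x mulf_eq0 invr_eq0 (negbTE c1) orbF.
by move/eqP.
Qed.

Lemma cplx_quad {C : numClosedFieldType} (a b c : C) : 0 <= c ->
  (forall t : C, 0 <= t^* * a + t * b + t * t^* * c) -> a = 0.
Proof.
move=> hc h.
have e1 : a + b = 0.
  apply: (real_quad hc) => s sr; have := h s; rewrite conj_Creal //.
  by have -> : s * a + s * b + s * s * c = s * (a + b) + s * s * c by ring.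
have e2 : 'i * (b - a) = 0.
  apply: (real_quad hc) => s sr; have := h ('i * s).
  have -> : ('i * s)^* = - 'i * s.
    by rewrite -conjCi -[in RHS](conj_Creal sr) -rmorphM.
  have -> : - 'i * s * a + 'i * s * b + 'i * s * (- 'i * s) * c =
            s * ('i * (b - a)) + s * s * (- ('i * 'i)) * c by ring.
  by rewrite -(expr2 'i) sqrCi opprK mulr1.
move/eqP: e2; rewrite mulf_eq0 (negbTE (neq0Ci _)) /= subr_eq0 => /eqP eb.
move/eqP: e1; rewrite eb -mulr2n mulrn_eq0 /= => /eqP //.
Qed.

Lemma eps_ge0 {C : numClosedFieldType} (a t0 : C) : 0 <= t0 ->
  (forall e : C, 0 < e -> 0 <= a + e * t0) -> 0 <= a.
Proof.
move=> ht h.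
have [t00|nz] := eqVneq t0 0.
  by have := h 1 ltr01; rewrite t00 mulr0 addr0.
have tp : 0 < t0 by rewrite lt_def nz ht.
apply/ler_addgt0Pr => e he.
have := h (e / t0) (divr_gt0 he tp).
by rewrite divfK.
Qed.
Lemma col0 {C : numClosedFieldType} p k (M : 'M[C]_(p, k)) :
  (forall j, M *m (delta_mx j 0 : 'cV[C]_k) = 0) -> M = 0.
Proof.
move=> h; apply/matrixP => i j.
have := congr1 (fun M : 'M[C]_(p, 1) => M i 0) (h j).
by rewrite /= -colE !mxE.
Qed.

Lemma rng {C : numClosedFieldType} k p (X B : 'M[C]_k) (N : 'M[C]_(p, k)) :
  X ^t* = X -> penrose X B -> (forall v : 'cV[C]_k, X *m v = 0 -> N *m v = 0) ->
  N *m (X *m B) = N.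
Proof.
move=> hX hB hN.
have hB' := penrose_herm hX hB.
case: hB => b1 b2 b3 b4.
have BX : X *m B = B *m X by rewrite -b3 adjM hX hB'.
have e : X *m (1%:M - X *m B) = 0 by rewrite mulmxBr mulmx1 BX mulmxA b1 subrr.
have : N *m (1%:M - X *m B) = 0.
  apply: col0 => j; rewrite -mulmxA; apply: hN.
  by rewrite mulmxA e mul0mx.
by rewrite mulmxBr mulmx1 => /eqP; rewrite subr_eq0 => /eqP <-.
Qed.

Lemma rng' {C : numClosedFieldType} k p (X B : 'M[C]_k) (K : 'M[C]_(k, p)) :
  X ^t* = X -> penrose X B -> (forall v : 'cV[C]_k, X *m v = 0 -> K ^t* *m v = 0) ->
  X *m B *m K = K.
Proof.
move=> hX hB hN; have := rng hX hB hN.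
move=> /(congr1 (fun M => M ^t*)); rewrite /= adjM trmxCK.
by case: hB => _ _ -> _.
Qed.

Lemma adj_col {C : numClosedFieldType} m1 m2 n (a : 'M[C]_(m1, n)) (b : 'M[C]_(m2, n)) :
  (col_mx a b) ^t* = row_mx (a ^t*) (b ^t*).
Proof. by rewrite tr_col_mx map_row_mx. Qed.

Lemma quad_block {C : numClosedFieldType} m1 (A Bm Cm D : 'M[C]_m1) a b :
  bf (block_mx A Bm Cm D) (col_mx a b) (col_mx a b) =
  bf A a a + bf Cm b a + bf Bm a b + bf D b b.
Proof.
rewrite /bf adj_col mul_row_block mul_row_col !mulmxDl !mxE.
by rewrite !addrA.
Qed.
Lemma W_psd {C : numClosedFieldType} m (K X Xp : 'M[C]_m) :
  psdmx X -> penrose X Xp -> (forall v : 'cV[C]_m, X *m v = 0 -> K ^t* *m v = 0) ->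
  psdmx (block_mx (K ^t* *m Xp *m K) (- K ^t*) (- K) X).
Proof.
move=> hX hXp hker.
have Xh := psd_herm hX; have Xph := penrose_herm Xh hXp.
have XXK := rng' Xh hXp hker.
have KXpX : K ^t* *m Xp *m X = K ^t*.
  by have := congr1 (fun M => M ^t*) XXK; rewrite /= !adjM Xh Xph mulmxA.
case: hXp => p1 p2 p3 p4.
move=> v; rewrite -/(bf _ v v) -(vsubmxK v) quad_block.
set a := usubmx v; set b := dsubmx v.
pose d := Xp *m K *m a.
have dE : d ^t* = a ^t* *m K ^t* *m Xp by rewrite /d !adjM Xph mulmxA.
have h1 : forall Y : 'M[C]_(1, m), Y *m Xp *m X *m Xp = Y *m Xp.
  by move=> Y; rewrite -!mulmxA [Xp *m (X *m Xp)]mulmxA p2.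
have h2 : forall Y : 'M[C]_(1, m), Y *m X *m Xp *m K = Y *m K.
  by move=> Y; rewrite -!mulmxA [X *m (Xp *m K)]mulmxA XXK.
have h3 : forall Y : 'M[C]_(1, m), Y *m K ^t* *m Xp *m X = Y *m K ^t*.
  by move=> Y; rewrite -!mulmxA [K ^t* *m (Xp *m X)]mulmxA KXpX.
have e1 : bf (K ^t* *m Xp *m K) a a = bf X d d.
  by rewrite /bf dE /d !mulmxA h1.
have e2 : bf (- K) b a = - bf X b d.
  by rewrite bf_opp /bf /d !mulmxA h2.
have e3 : bf (- K ^t*) a b = - bf X d b.
  by rewrite bf_opp /bf dE h3.
rewrite e1 e2 e3.
have := hX (d + (-1) *: b); rewrite -/(bf _ _ _) !bfDl !bfDr !bfZl !bfZr.
rewrite rmorphN1.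
move=> h; suff <- : bf X d d + -1 * bf X d b + (-1 * bf X b d + -1 * (-1 * bf X b b)) = bf X d d - bf X b d - bf X d b + bf X b b by [].
ring.
Qed.
Lemma mxtraceN' {C : numClosedFieldType} k (A : 'M[C]_k) : \tr (- A) = - \tr A.
Proof. exact: raddfN. Qed.

Lemma forward {C : numClosedFieldType} n m (phi : {linear 'M[C]_n -> 'M[C]_m}) phis :
  positive_map phi -> hs_adjoint phi phis -> gen_schwarz phi ->
  forall K X : 'M[C]_m, psdmx X ->
      (forall v : 'cV[C]_m, X *m v = 0 -> K ^t* *m v = 0) ->
      \tr ((phis K) ^t* *m mpinv (phis X) *m phis K)
        <= \tr (phis (K ^t* *m mpinv X *m K)).
Proof.
move=> hpos hadj hgs K X hX hker.
have hP : psdmx (phis X) := phis_pos hpos hadj hX.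
have pB := mpinvP hP; have Ph := psd_herm hP; have Bh := penrose_herm Ph pB.
have pX := mpinvP hX; have Xh := psd_herm hX; have Xph := penrose_herm Xh pX.
have hW := W_psd hX pX hker.
move: pB Bh pX Xph hW.
set P := phis X; set G := phis K; set B := mpinv P; set Xp := mpinv X.
move=> pB Bh pX Xph hW.
set Q := K ^t* *m Xp *m K.
have Qh : Q ^t* = Q by rewrite /Q !adjM trmxCK Xph mulmxA.
pose Z := B *m G.
have hM := hgs (Z ^t*).
have := tr_psd_mul hM hW.
rewrite mulmx_block mxtrace_block trmxCK phi_herm // trmxCK.
rewrite !mxtraceD !mulmxN !mxtraceN'.
set t := \tr (G ^t* *m B *m G).
have tr : t^* = t by rewrite /t -tr_adj !adjM trmxCK Bh mulmxA.
have ta : \tr (phi 1%:M *m Q) = \tr (phis Q).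
  by rewrite mxtrace_mulC -[in LHS]Qh hadj mulmx1 -(phis_herm hpos hadj) Qh.
have tb : \tr ((phi Z) ^t* *m K) = t.
  by rewrite tr_conj trmxCK hadj /Z mulmxA tr.
have tc : \tr (phi Z *m K ^t*) = t.
  by rewrite mxtrace_mulC hadj /Z mulmxA.
have td : \tr (phi (Z *m Z ^t*) *m X) = t.
  rewrite mxtrace_mulC -[in LHS]Xh hadj Ph mulmxA mxtrace_mulC mulmxA.
  rewrite /Z adjM Bh.
  case: pB => _ p2 _ _.
  rewrite mulmxA -(mulmxA (G ^t* *m B) (phis X) B) -(mulmxA (G ^t*) B (phis X *m B)).
  by rewrite (mulmxA B (phis X) B) p2.
rewrite ta tb tc td => h.
rewrite -subr_ge0.
suff <- : \tr (phis Q) + - t + (- t + t) = \tr (phis Q) - t by [].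
by rewrite addNr addr0.
Qed.
Lemma vec0 {C : numClosedFieldType} k (c : 'cV[C]_k) :
  (forall u : 'cV[C]_k, (u ^t* *m c) 0 0 = 0) -> c = 0.
Proof.
move=> h; apply/matrixP => i j; rewrite (ord1 j).
have := h (delta_mx i 0); rewrite trmx_delta map_delta_mx -rowE !mxE => ->.
by [].
Qed.

Lemma phi_kill {C : numClosedFieldType} n m (phi : {linear 'M[C]_n -> 'M[C]_m}) :
  positive_map phi -> forall w : 'cV[C]_n, phi (w *m w ^t*) = 0 ->
  forall u, phi (w *m u ^t*) = 0.
Proof.
move=> hpos w h0 u; apply: bf_zero => z.
have hc : 0 <= bf (phi (u *m u ^t*)) z z by apply: (hpos _ (psd_rank1 u)).
apply: (@cplx_quad _ _ (bf (phi (u *m w ^t*)) z z) _ hc) => t.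
have := hpos _ (psd_rank1 (w + t *: u)) z; rewrite -/(bf _ z z).
rewrite adjD adjZ mulmxDl !mulmxDr -!scalemxAl -!scalemxAr.
rewrite !linearD !linearZ /= h0 add0r !bf_lin !bfZm.
by rewrite addrA mulrA.
Qed.
Lemma adj0 {C : numClosedFieldType} p k : (0 : 'M[C]_(p, k)) ^t* = 0.
Proof. by rewrite trmx0 map_mx0. Qed.

Lemma ker_S {C : numClosedFieldType} n m (phi : {linear 'M[C]_n -> 'M[C]_m}) phis :
  positive_map phi -> hs_adjoint phi phis -> forall (x y : 'cV[C]_m) (e : C), 0 < e ->
  forall w : 'cV[C]_n, (phis (y *m y ^t*) + e *: phis 1%:M) *m w = 0 ->
  phis (x *m y ^t*) *m w = 0.
Proof.
move=> hpos hadj x y e he w hw.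
have hR := phis_pos hpos hadj (psd_rank1 y).
have h1 := phis_pos hpos hadj (@psd1 C m).
have q0 : bf (phis 1%:M) w w = 0.
  have : bf (phis (y *m y ^t*) + e *: phis 1%:M) w w = 0.
    by rewrite /bf -mulmxA hw mulmx0 mxE.
  have a1 : 0 <= bf (phis (y *m y ^t*)) w w by apply: hR.
  have a2 : 0 <= bf (phis 1%:M) w w by apply: h1.
  rewrite bf_lin bfZm => /eqP; rewrite (paddr_eq0 a1 (mulr_ge0 (ltW he) a2)).
  by case/andP => _; rewrite mulf_eq0 gt_eqF //= => /eqP.
have tr0 : \tr (phi (w *m w ^t*)) = 0.
  by have := hadj 1%:M (w *m w ^t*); rewrite adj1 mul1mx => ->; rewrite trvv bf_adj q0 conjC0.
have p0 : phi (w *m w ^t*) = 0 := psd_tr0 (hpos _ (psd_rank1 w)) tr0.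
have pk := phi_kill hpos p0.
apply: vec0 => u.
rewrite mulmxA -/(bf _ u w) -trvv tr_conj adjM trmxCK mxtrace_mulC -hadj.
have -> : u *m w ^t* = (w *m u ^t*) ^t* by rewrite adjM trmxCK.
by rewrite phi_herm // pk adj0 mulmx0 mxtrace0 conjC0.
Qed.
Lemma Xprime {C : numClosedFieldType} m (x y : 'cV[C]_m) (e : C) : 0 < e ->
  let X' := y *m y ^t* + e *: 1%:M in
  let n0 := (y ^t* *m y) 0 0 in
  [/\ psdmx X', 0 <= n0,
      (forall w : 'cV[C]_m, X' *m w = 0 -> (y *m x ^t*) ^t* *m w = 0) &
      (y *m x ^t*) ^t* *m mpinv X' *m (y *m x ^t*) = (n0 / (n0 + e)) *: (x *m x ^t*)].
Proof.
move=> he X' n0.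
have hX : psdmx X' by apply: psdD; [apply: psd_rank1 | apply: psdZ; [apply: ltW | apply: psd1]].
have n0ge : 0 <= n0 by have := @psd1 C m y; rewrite mulmx1.
have Np : 0 < n0 + e by apply: ltr_wpDl.
have Nr : (n0 + e)^* = n0 + e by rewrite conj_Creal // gtr0_real.
have yy : y ^t* *m y = n0%:M by apply: mx11_scalar.
have Xy : X' *m y = (n0 + e) *: y.
  by rewrite /X' mulmxDl -mulmxA yy mul_mx_scalar -scalemxAl mul1mx scalerDl.
have yX : y ^t* *m X' = (n0 + e) *: y ^t*.
  have := congr1 (fun M => M ^t*) Xy; rewrite /= adjM adjZ Nr.
  by rewrite (psd_herm hX).
split => //.
- move=> w hw; rewrite adjM trmxCK -mulmxA.
  have : y ^t* *m (X' *m w) = 0 by rewrite hw mulmx0.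
  rewrite mulmxA yX -scalemxAl => /eqP; rewrite scaler_eq0 gt_eqF //= => /eqP ->.
  by rewrite mulmx0.
- have pX := mpinvP hX; case: pX => p1 p2 p3 p4.
  have key : (n0 + e) *: y ^t* *m mpinv X' *m ((n0 + e) *: y) = (n0 + e) *: (n0%:M : 'M[C]_1).
    rewrite -yX -Xy mulmxA -(mulmxA (y ^t* *m X') (mpinv X') X').
    rewrite -(mulmxA (y ^t*) X' (mpinv X' *m X')) (mulmxA X' (mpinv X') X') p1.
    by rewrite yX -scalemxAl yy.
  rewrite -!scalemxAl -scalemxAr in key.
  have key2 : y ^t* *m mpinv X' *m y = (n0 / (n0 + e))%:M.
    move/eqP: key; rewrite -subr_eq0 -scalerBr scaler_eq0 gt_eqF //= subr_eq0 => /eqP key.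
    have := congr1 (fun M => (n0 + e)^-1 *: M) key; rewrite /= scalerA mulVf ?gt_eqF //.
    by rewrite scale1r => ->; rewrite -scalemx1 scalemx1 scale_scalar_mx mulrC.
  rewrite adjM trmxCK.
  rewrite -[x *m y ^t* *m mpinv X' *m (y *m x ^t*)]mulmxA.
  rewrite !mulmxA -(mulmxA x (y ^t*) (mpinv X')) -(mulmxA x (y ^t* *m mpinv X') y) key2.
  by rewrite mul_mx_scalar -scalemxAl.
Qed.
Lemma backward {C : numClosedFieldType} n m (phi : {linear 'M[C]_n -> 'M[C]_m}) phis :
  positive_map phi -> hs_adjoint phi phis ->
  (forall K X : 'M[C]_m, psdmx X ->
      (forall v : 'cV[C]_m, X *m v = 0 -> K ^t* *m v = 0) ->
      \tr ((phis K) ^t* *m mpinv (phis X) *m phis K)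
        <= \tr (phis (K ^t* *m mpinv X *m K))) ->
  gen_schwarz phi.
Proof.
move=> hpos hadj hyp K v; rewrite -/(bf _ v v) -(vsubmxK v) quad_block.
set x := usubmx v; set y := dsubmx v.
have Ppos := phis_pos hpos hadj.
have hR := Ppos _ (psd_rank1 y); have hP1 := Ppos _ (@psd1 C m).
have Rh := psd_herm hR.
have hT1 : 0 <= \tr (phis (x *m x ^t*)) := tr_psd (Ppos _ (psd_rank1 x)).
have xx : (x *m x ^t*) ^t* = x *m x ^t* by rewrite adjM trmxCK.
have yy : (y *m y ^t*) ^t* = y *m y ^t* by rewrite adjM trmxCK.
have yx : (x *m y ^t*) ^t* = y *m x ^t* by rewrite adjM trmxCK.
have f1 : bf (phi 1%:M) x x = \tr (phis (x *m x ^t*)).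
  by rewrite -trvv mxtrace_mulC -[in LHS]xx hadj mulmx1 -(phis_herm hpos hadj) xx.
have f2 : bf (phi K) x y = \tr ((phis (x *m y ^t*)) ^t* *m K).
  by rewrite -trvv mxtrace_mulC -yx hadj.
have f3 : bf ((phi K) ^t*) y x = (\tr ((phis (x *m y ^t*)) ^t* *m K))^*.
  by rewrite bf_adj f2.
have f4 : bf (phi (K ^t* *m K)) y y = \tr (phis (y *m y ^t*) *m (K ^t* *m K)).
  by rewrite -trvv mxtrace_mulC -[in LHS]yy hadj Rh.
rewrite f1 f2 f3 f4.
move: hR Rh hP1; set R := phis (y *m y ^t*); set P1 := phis 1%:M => hR Rh hP1.
set H := phis (x *m y ^t*).
set T1 := \tr (phis (x *m x ^t*)); set T2 := \tr (H ^t* *m K).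
set U := \tr (R *m (K ^t* *m K)).
apply: (@eps_ge0 _ _ (\tr (K *m P1 *m K ^t*))); first exact: tr_sand.
move=> e he.
have [hX' n0ge hker' eQ] := Xprime x y he.
have hin := hyp (y *m x ^t*) _ hX' hker'.
rewrite eQ (phis_scale hadj) mxtraceZ -yx (phis_herm hpos hadj) trmxCK in hin.
rewrite (phis_add hadj) (phis_scale hadj) -/R -/P1 -/H in hin.
have hS : psdmx (R + e *: P1) by apply: psdD => //; apply: psdZ => //; apply: ltW.
move: hin hS; set S : 'M[C]_n := R + e *: P1 => hin hS.
have Sh := psd_herm hS; have pS := mpinvP hS; have Sph := penrose_herm Sh pS.
have kerS : forall w : 'cV[C]_n, S *m w = 0 -> H *m w = 0.
  by move=> w hw; apply: (ker_S hpos hadj x he hw).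
have HSS := rng Sh pS kerS.
move: hin HSS Sph pS; set Sp := mpinv S => hin HSS Sph pS.
move: hin; set c := (y ^t* *m y) 0 0 / ((y ^t* *m y) 0 0 + e) => hin.
have hc1 : c * T1 <= T1.
  rewrite -subr_ge0 -{1}[T1]mul1r -mulrBl; apply: mulr_ge0 => //.
  have Np : 0 < (y ^t* *m y) 0 0 + e by apply: ltr_wpDl.
  by rewrite subr_ge0 /c ler_pdivrMr // mul1r lerDl ltW.
case: pS => p1 p2 p3 p4.
have SpS : Sp *m S = S *m Sp by rewrite -p4 adjM Sph Sh.
have HSpS : H *m Sp *m S = H by rewrite -mulmxA SpS HSS.
have SSH : S *m Sp *m H ^t* = H ^t*.
  by have := congr1 (fun M => M ^t*) HSS; rewrite /= adjM p3.
have e4 : \tr (K *m S *m K ^t*) = U + e * \tr (K *m P1 *m K ^t*).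
  rewrite /S mulmxDr mulmxDl mxtraceD -scalemxAr -scalemxAl mxtraceZ.
  by rewrite mxtrace_mulC mulmxA mxtrace_mulC.
clearbody S.
have hD := tr_sand (K + H *m Sp) hS.
rewrite adjD adjM Sph mulmxDl mulmxDr !mulmxDl !mxtraceD in hD.
have e1 : \tr (K *m S *m (Sp *m H ^t*)) = T2.
  by rewrite mulmxA -(mulmxA K S Sp) -(mulmxA K (S *m Sp)) SSH mxtrace_mulC.
have e2 : \tr (H *m Sp *m S *m K ^t*) = T2^*.
  by rewrite HSpS tr_conj trmxCK mxtrace_mulC.
have e3 : \tr (H *m Sp *m S *m (Sp *m H ^t*)) = \tr (H *m Sp *m H ^t*).
  by rewrite HSpS mulmxA.
rewrite e1 e2 e3 e4 in hD.
have hle := le_trans hin hc1.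
have -> : T1 + T2^* + T2 + U + e * \tr (K *m P1 *m K ^t*) =
  (U + e * \tr (K *m P1 *m K ^t*) + T2 + (T2^* + \tr (H *m Sp *m H ^t*))) +
  (T1 - \tr (H *m Sp *m H ^t*)) by ring.
apply: addr_ge0; last by rewrite subr_ge0.
by move: hD; rewrite !addrA (addrAC _ T2^*).
Qed.

Unset Implicit Arguments. Set Strict Implicit.

Theorem theorem1p3 (C : numClosedFieldType) (n m : nat)
  (phi : {linear 'M[C]_n -> 'M[C]_m}) (phis : 'M[C]_m -> 'M[C]_n) :
  positive_map phi -> hs_adjoint phi phis ->
  (gen_schwarz phi <->
   (forall K X : 'M[C]_m, psdmx X ->
      (forall v : 'cV[C]_m, X *m v = 0 -> K ^t* *m v = 0) ->
      \tr ((phis K) ^t* *m mpinv (phis X) *m phis K)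
        <= \tr (phis (K ^t* *m mpinv X *m K)))).
Proof.
move=> hpos hadj; split.
- by move=> hgs; apply: (forward hpos hadj hgs).
- by move=> hyp; apply: (backward hpos hadj hyp).
Qed.
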